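(* Let $\Gamma$ be a reachability-price game on a simple single-clock timed automaton (in the setting described in the context), and let $I_1=[b_1,r]$ and $I_2=[r,e_2]$ be intervals contained in $[0,1]$. Let $\Gamma'_{I_1}=\mathrm{CostConsistent}(\Gamma_{I_1},\mathrm{OptCost}_{\Gamma_{I_2}})$. Then for every location $l$ of $\Gamma$ and every $x\in I_1\cup I_2$, $$\big(\mathrm{OptCost}_{\Gamma'_{I_1}}\oplus\mathrm{OptCost}_{\Gamma_{I_2}}\big)(l,x)=\mathrm{OptCost}_{\Gamma_{I_1\cup I_2}}(l,x),$$ i.e. $\mathrm{OptCost}_{\Gamma_{I_1\cup I_2}}(l,x)$ equals $\mathrm{OptCost}_{\Gamma'_{I_1}}(l,x)$ for $x\in I_1$ and equals $\mathrm{OptCost}_{\Gamma_{I_2}}(l,x)$ for $x\in I_2\setminus I_1$.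
   Context: Setting: a game $\Gamma$ consists of a finite set of locations $L=L^{\mathrm{Min}}\cup L^{\mathrm{Max}}$ (disjoint), goal locations $L^{\mathrm{Goal}}\subseteq L$ each assigned a cost function (continuous, non-increasing, piecewise affine with finitely many pieces, real-valued), an edge set $E\subseteq L\times L$ (all guards true, no resets, discrete transitions have price $0$), an urgency map $\mathrm{urg}:L\to\{0,1\}$ and price rates $\pi:L\to\mathbb{N}$. For an interval $J=[b,e]\subseteq[0,1]$, the restricted game $\Gamma_J$ has states $L\times J$, goal cost functions restricted to $J$, discrete transitions $(l,x)\to(l',x)$ for $(l,l')\in E$ with price $0$, and continuous transitions $(l,x)\xrightarrow{t}(l,x+t)$ for $t>0$, $\mathrm{urg}(l)=0$, $x+t\le e$, with price $\pi(l)t$. Runs are finite or infinite sequences of consecutive transitions, not containing infinitely many consecutive continuous transitions. Strategies of the minimizer (maximizer) map finite runs ending in states with location in $L^{\mathrm{Min}}$ ($L^{\mathrm{Max}}$) to an available transition; $\mathrm{Run}(s,\mu,\chi)$ is the unique resulting run. The cost of a run that first visits a goal location $l$ at state $(l,x)$ after $n$ transitions is (goal cost function of $l$)$(x)$ plus the sum of the prices of the first $n$ transitions, and $\infty$ if no goal location is visited. $\mathrm{OptCost}_{\Gamma_J}(s)=\inf_\mu\sup_\chi\mathrm{Cost}(\mathrm{Run}(s,\mu,\chi))$; it is assumed finite from every state. A location $l$ is non-urgent if $l\notin L^{\mathrm{Goal}}$ and $\mathrm{urg}(l)=0$. Override: for $h:D_1\to\mathbb{R}$, $g:D_2\to\mathbb{R}$,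 $(h\oplus g)(z)=h(z)$ if $z\in D_1$ and $g(z)$ if $z\in D_2\setminus D_1$. $\Gamma[L^{\mathrm{Goal}}\cup l,h]$ denotes the game obtained by adding $l$ (possibly a fresh location) to the goal locations with cost function $h$ (overriding any previous one); $\Gamma[E\cup e]$ adds edge $e$. $\mathrm{CostConsistent}(\Gamma_{I_1},\mathrm{OptCost}_{\Gamma_{I_2}})$, for $I_1=[b_1,r]$, $I_2=[r,e_2]$, is obtained from $\Gamma$ by, for each non-urgent location $l_i$ of $\Gamma$ ($i=1,\dots,k$), adding a fresh goal location $l_i'$ with cost function $x\mapsto\mathrm{OptCost}_{\Gamma_{I_2}}(l_i,r)+(r-x)\pi(l_i)$ and adding the edge $(l_i,l_i')$, and then restricting the resulting game to $I_1$. *)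

(* Defs.v *)
From Stdlib Require Import Reals List ClassicalEpsilon.
Import ListNotations.
Open Scope R_scope.
Set Implicit Arguments.

(* A game: ownership (true = Min, false = Max), edges, urgency (true = urgent,
   i.e. urg = 1), price rates, and goal cost functions (None = not a goal). *)
Record Game (L : Type) := mkGame {
  gmin   : L -> bool;
  gedge  : L -> L -> Prop;
  gurg   : L -> bool;
  gprice : L -> nat;
  ggoal  : L -> option (R -> R)
}.

(* Transitions: discrete move to a location (price 0, no guard, no reset),
   or a delay t (price pi(l) * t). *)
Inductive trans (L : Type) : Type :=
| Disc  : L -> trans L
| Delay : R -> trans L.
Arguments Delay {L} _.

Definition step {L} (s : L * R) (tr : trans L) : L * R :=
  match tr with
  | Disc l' => (l', snd s)
  | Delay t => (fst s, snd s + t)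
  end.

Definition cur {L} (s0 : L * R) (h : list (trans L)) : L * R :=
  fold_left step h s0.

Definition tprice {L} (G : Game L) (s : L * R) (tr : trans L) : R :=
  match tr with
  | Disc _ => 0
  | Delay t => INR (gprice G (fst s)) * t
  end.

Fixpoint hprice {L} (G : Game L) (s : L * R) (h : list (trans L)) : R :=
  match h with
  | [] => 0
  | tr :: h' => tprice G s tr + hprice G (step s tr) h'
  end.

(* transition tr is available from state s in the game restricted to an
   interval with upper end e *)
Definition avail {L} (G : Game L) (e : R) (s : L * R) (tr : trans L) : Prop :=
  match tr with
  | Disc l' => gedge G (fst s) l'
  | Delay t => 0 < t /\ gurg G (fst s) = false /\ snd s + t <= e
  end.

Definition is_delay {L} (tr : trans L) : Prop :=
  match tr with Delay _ => True | Disc _ => False end.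

(* A strategy maps a finite run (start state + transitions) to a transition. *)
Definition strat (L : Type) := L * R -> list (trans L) -> trans L.

Fixpoint dchain {L} (sigma : strat L) (s0 : L * R) (h : list (trans L)) (n : nat)
  : list (trans L) :=
  match n with
  | O => h
  | S n' => let h' := dchain sigma s0 h n' in h' ++ [sigma s0 h']
  end.

(* A valid strategy of player p (true = Min) in the game restricted to an
   interval with upper end e: it chooses an available transition whenever
   one exists, and never produces infinitely many consecutive (available)
   continuous transitions. *)
Definition valid_strat {L} (G : Game L) (e : R) (p : bool) (sigma : strat L) : Prop :=
  (forall s0 h, gmin G (fst (cur s0 h)) = p ->
     (exists tr, avail G e (cur s0 h) tr) -> avail G e (cur s0 h) (sigma s0 h)) /\
  (forall s0 h, gmin G (fst (cur s0 h)) = p ->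
     exists n, ~ (is_delay (sigma s0 (dchain sigma s0 h n)) /\
                  avail G e (cur s0 (dchain sigma s0 h n)) (sigma s0 (dchain sigma s0 h n)))).

Fixpoint play {L} (G : Game L) (mu chi : strat L) (s0 : L * R) (n : nat)
  : list (trans L) :=
  match n with
  | O => []
  | S n' => let h := play G mu chi s0 n' in
            h ++ [if gmin G (fst (cur s0 h)) then mu s0 h else chi s0 h]
  end.

(* Run(s0, mu, chi) first visits a goal location after n transitions, and its
   cost is c.  (The run stops at a state with no available transition.) *)
Definition reaches {L} (G : Game L) (e : R) (s0 : L * R) (mu chi : strat L)
  (n : nat) (c : R) : Prop :=
  (exists g, ggoal G (fst (cur s0 (play G mu chi s0 n))) = Some g /\
     c = g (snd (cur s0 (play G mu chi s0 n))) + hprice G s0 (play G mu chi s0 n)) /\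
  (forall m, (m < n)%nat ->
     ggoal G (fst (cur s0 (play G mu chi s0 m))) = None /\
     exists tr, avail G e (cur s0 (play G mu chi s0 m)) tr).

(* Cost(Run(s0, mu, chi)) <= w   (the cost is +infinity if no goal is reached) *)
Definition cost_le {L} (G : Game L) (e : R) (s0 : L * R) (mu chi : strat L) (w : R)
  : Prop :=
  exists n c, reaches G e s0 mu chi n c /\ c <= w.

(* v = OptCost_{G_[b,e]}(s) = inf_mu sup_chi Cost(Run(s,mu,chi)), v finite *)
Definition isOptCost {L} (G : Game L) (b e : R) (s : L * R) (v : R) : Prop :=
  b <= snd s <= e /\
  (forall eps, 0 < eps -> exists mu, valid_strat G e true mu /\
     forall chi, valid_strat G e false chi -> cost_le G e s mu chi (v + eps)) /\
  (forall mu, valid_strat G e true mu -> forall w, w < v ->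
     exists chi, valid_strat G e false chi /\ ~ cost_le G e s mu chi w).

(* OptCost of the restricted game G_[b,e] at state s (meaningful when finite) *)
Definition OptCost {L} (G : Game L) (b e : R) (s : L * R) : R :=
  epsilon (inhabits 0) (isOptCost G b e s).

Definition pw_affine_01 (f : R -> R) : Prop :=
  exists (n : nat) (t : nat -> R),
    t O = 0 /\ t n = 1 /\
    (forall i, (i < n)%nat -> t i < t (S i)) /\
    (forall i, (i < n)%nat -> exists a c, forall x, t i <= x <= t (S i) -> f x = a * x + c).

Definition cost_fun_ok (f : R -> R) : Prop :=
  (forall x y, 0 <= x -> x <= y -> y <= 1 -> f y <= f x) /\
  (forall x, 0 <= x <= 1 -> forall eps, 0 < eps -> exists delta, 0 < delta /\
     forall y, 0 <= y <= 1 -> Rabs (y - x) < delta -> Rabs (f y - f x) < eps) /\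
  pw_affine_01 f.

Definition game_ok {L} (G : Game L) : Prop :=
  (exists enum : list L, forall l, In l enum) /\
  (forall l g, ggoal G l = Some g -> cost_fun_ok g).

Definition nonurgentb {L} (G : Game L) (l : L) : bool :=
  match ggoal G l with
  | None => negb (gurg G l)
  | Some _ => false
  end.

(* Locations of the new game: inl l = original l; inr l = fresh copy l'
   of a non-urgent location l. *)
Definition CCLoc {L} (G : Game L) : Type := (L + {l : L | nonurgentb G l = true})%type.

(* CostConsistent(G, OptCost_{G_[r,e2]}) before restriction to I1 = [b1, r]
   (the restriction is given by the interval passed to OptCost). *)
Definition CostConsistent {L} (G : Game L) (r e2 : R) : Game (CCLoc G) :=
  {| gmin := fun l => match l with inl l0 => gmin G l0 | inr _ => true end;
     gedge := fun l1 l2 => match l1, l2 with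
                           | inl a, inl b => gedge G a b
                           | inl a, inr b => proj1_sig b = a
                           | _, _ => False
                           end;
     gurg := fun l => match l with inl l0 => gurg G l0 | inr _ => true end;
     gprice := fun l => match l with inl l0 => gprice G l0 | inr _ => O end;
     ggoal := fun l => match l with
                       | inl l0 => ggoal G l0
                       | inr l0 => Some (fun x => OptCost G r e2 (proj1_sig l0, r)
                                          + (r - x) * INR (gprice G (proj1_sig l0)))
                       end |}.

(* Main.v *)
Require Import Defs.
From Stdlib Require Import Reals Lra Lia List ClassicalEpsilon Classical.
Import ListNotations.
Open Scope R_scope.

Section Gen.
Context {L : Type} (G : Game L) (e : R).

Lemma cur_app (s : L * R) h1 h2 : cur s (h1 ++ h2) = cur (cur s h1) h2.
Proof. unfold cur. apply fold_left_app. Qed.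

Lemma cur_snoc (s : L * R) h a : cur s (h ++ [a]) = step (cur s h) a.
Proof. rewrite cur_app. reflexivity. Qed.

Lemma hprice_app (s : L * R) h1 h2 :
  hprice G s (h1 ++ h2) = hprice G s h1 + hprice G (cur s h1) h2.
Proof.
  revert s; induction h1 as [|a h1 IH]; intros s; simpl.
  - ring.
  - rewrite IH. unfold cur. simpl. ring.
Qed.

Lemma dchain_S (sg : strat L) s0 h n :
  dchain sg s0 h (S n) = dchain sg s0 (h ++ [sg s0 h]) n.
Proof.
  induction n as [|n IH].
  - reflexivity.
  - change (dchain sg s0 h (S (S n))) with
      (dchain sg s0 h (S n) ++ [sg s0 (dchain sg s0 h (S n))]).
    rewrite IH. reflexivity.
Qed.

Lemma dchain_ext (sg : strat L) s0 h n : exists k, dchain sg s0 h n = h ++ k.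
Proof.
  induction n as [|n [k Hk]].
  - exists []. rewrite app_nil_r. reflexivity.
  - simpl. rewrite Hk. exists (k ++ [sg s0 (h ++ k)]). rewrite app_assoc. reflexivity.
Qed.

Definition adelay (s : L * R) (tr : trans L) : Prop := is_delay tr /\ avail G e s tr.

Definition T (sg : strat L) s0 h : Prop :=
  exists n, ~ adelay (cur s0 (dchain sg s0 h n)) (sg s0 (dchain sg s0 h n)).

Lemma T_step sg s0 h : T sg s0 (h ++ [sg s0 h]) -> T sg s0 h.
Proof. intros [n Hn]. exists (S n). rewrite dchain_S. exact Hn. Qed.

Lemma T_now sg s0 h : ~ adelay (cur s0 h) (sg s0 h) -> T sg s0 h.
Proof. intros H. exists O. exact H. Qed.

Lemma T_time sg s0 h : e <= snd (cur s0 h) -> T sg s0 h.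
Proof.
  intros H. apply T_now. intros [Hd Ha]. destruct (sg s0 h); simpl in *; [contradiction|].
  lra.
Qed.

Lemma T_agree sg sg' s0 h :
  (forall k, sg s0 (h ++ k) = sg' s0 (h ++ k)) -> T sg' s0 h -> T sg s0 h.
Proof.
  intros Hag [n Hn]. exists n.
  assert (E : forall m, dchain sg s0 h m = dchain sg' s0 h m).
  { induction m as [|m IH]; [reflexivity|]. simpl. rewrite IH.
    destruct (dchain_ext sg' s0 h m) as [k Hk]. rewrite Hk, Hag. reflexivity. }
  rewrite E. destruct (dchain_ext sg' s0 h n) as [k Hk]. rewrite Hk in *. rewrite Hag. exact Hn.
Qed.

Lemma valid_T p sg : valid_strat G e p sg ->
  forall s0 h, gmin G (fst (cur s0 h)) = p -> T sg s0 h.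
Proof. intros [_ H2] s0 h Hp. destruct (H2 s0 h Hp) as [n Hn]. exists n. exact Hn. Qed.

Lemma valid_of p sg :
  (forall s0 h, gmin G (fst (cur s0 h)) = p ->
     (exists tr, avail G e (cur s0 h) tr) -> avail G e (cur s0 h) (sg s0 h)) ->
  (forall s0 h, gmin G (fst (cur s0 h)) = p -> T sg s0 h) ->
  valid_strat G e p sg.
Proof. intros H1 H2. split; [exact H1|]. intros s0 h Hp. destruct (H2 s0 h Hp) as [n Hn].
  exists n. exact Hn. Qed.

End Gen.

Lemma T_transfer {L1 L2 : Type} (G1 : Game L1) e1 (s1 : strat L1) (G2 : Game L2) e2
  (s2 : strat L2) (a1 : L1 * R) (a2 : L2 * R)
  (Rl : list (trans L1) -> list (trans L2) -> Prop) :
  (forall h k, Rl h k -> adelay G1 e1 (cur a1 h) (s1 a1 h) ->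
     (adelay G2 e2 (cur a2 k) (s2 a2 k) /\ Rl (h ++ [s1 a1 h]) (k ++ [s2 a2 k]))
     \/ T G1 e1 s1 a1 (h ++ [s1 a1 h])) ->
  forall h k, Rl h k -> T G2 e2 s2 a2 k -> T G1 e1 s1 a1 h.
Proof.
  intros Hyp h k HR [n Hn]. revert h k HR Hn. induction n as [|n IH]; intros h k HR Hn.
  - destruct (classic (adelay G1 e1 (cur a1 h) (s1 a1 h))) as [Ha|Ha].
    + destruct (Hyp h k HR Ha) as [[H1 _]|H2]; [contradiction|]. apply T_step. exact H2.
    + apply T_now. exact Ha.
  - destruct (classic (adelay G1 e1 (cur a1 h) (s1 a1 h))) as [Ha|Ha].
    + destruct (Hyp h k HR Ha) as [[H1 H1']|H2].
      * apply T_step. eapply IH; [exact H1'|]. rewrite <- dchain_S. exact Hn.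
      * apply T_step. exact H2.
    + apply T_now. exact Ha.
Qed.

Section Gen2.
Context {L : Type} (G : Game L) (e : R).

Definition dflt (s0 : L * R) (h : list (trans L)) : trans L :=
  match excluded_middle_informative (exists l', gedge G (fst (cur s0 h)) l') with
  | left H => Disc (proj1_sig (constructive_indefinite_description _ H))
  | right _ => Delay (e - snd (cur s0 h))
  end.

Lemma dflt_cases s0 h :
  (exists l', dflt s0 h = Disc l' /\ gedge G (fst (cur s0 h)) l') \/
  (dflt s0 h = Delay (e - snd (cur s0 h)) /\ ~ exists l', gedge G (fst (cur s0 h)) l').
Proof.
  unfold dflt. destruct (excluded_middle_informative _) as [H|H].
  - left. destruct (constructive_indefinite_description _ H) as [l' Hl']. simpl. eauto.
  - right. auto.
Qed.

Lemma dflt_avail s0 h : (exists tr, avail G e (cur s0 h) tr) -> avail G e (cur s0 h) (dflt s0 h).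
Proof.
  intros [tr Htr]. destruct (dflt_cases s0 h) as [[l' [-> Hl']]|[-> Hn]]; simpl; auto.
  destruct tr as [l'|t]; simpl in Htr.
  - exfalso. apply Hn. eauto.
  - destruct Htr as [H1 [H2 H3]]. repeat split; auto; lra.
Qed.

Lemma dflt_next_T sg s0 h : adelay G e (cur s0 h) (dflt s0 h) -> T G e sg s0 (h ++ [dflt s0 h]).
Proof.
  intros [Hd _]. destruct (dflt_cases s0 h) as [[l' [E _]]|[E _]]; rewrite E in *; simpl in Hd.
  - contradiction.
  - apply T_time. rewrite cur_snoc. simpl. lra.
Qed.

Lemma dflt_T s0 h : T G e dflt s0 h.
Proof.
  destruct (classic (adelay G e (cur s0 h) (dflt s0 h))) as [H|H].
  - apply T_step. apply dflt_next_T. exact H.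
  - apply T_now. exact H.
Qed.

Lemma dflt_valid p : valid_strat G e p dflt.
Proof. apply valid_of; intros; [apply dflt_avail; auto| apply dflt_T]. Qed.

Definition wrap (sg : strat L) : strat L := fun s0 h =>
  if excluded_middle_informative (avail G e (cur s0 h) (sg s0 h)) then sg s0 h else dflt s0 h.

Lemma wrap_cases sg s0 h :
  (wrap sg s0 h = sg s0 h /\ avail G e (cur s0 h) (sg s0 h)) \/ wrap sg s0 h = dflt s0 h.
Proof. unfold wrap. destruct (excluded_middle_informative _); auto. Qed.

Lemma wrap_avail sg s0 h : (exists tr, avail G e (cur s0 h) tr) -> avail G e (cur s0 h) (wrap sg s0 h).
Proof. intros H. unfold wrap. destruct (excluded_middle_informative _); auto. apply dflt_avail; auto. Qed.

Lemma fst_step_delay (s : L * R) c : is_delay c -> fst (step s c) = fst s.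
Proof. destruct c; simpl; tauto. Qed.

Definition shiftS (sg : strat L) s0 p : strat L := fun s h =>
  if excluded_middle_informative (s = cur s0 p) then sg s0 (p ++ h) else sg s h.

Lemma shiftS_at sg s0 p h : shiftS sg s0 p (cur s0 p) h = sg s0 (p ++ h).
Proof. unfold shiftS. destruct (excluded_middle_informative _) as [_|n]; [reflexivity|]. now exfalso. Qed.

Lemma shiftS_valid pl sg s0 p : valid_strat G e pl sg -> valid_strat G e pl (shiftS sg s0 p).
Proof.
  intros Hv. assert (Hv' := Hv). destruct Hv' as [H1 H2]. apply valid_of.
  - intros s h Hp Hex. unfold shiftS. destruct (excluded_middle_informative _) as [E|E].
    + subst s. rewrite <- cur_app in *. apply H1; auto.
    + apply H1; auto.
  - intros s h Hp. destruct (excluded_middle_informative (s = cur s0 p)) as [E|E].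
    + subst s. apply (T_transfer G e (shiftS sg s0 p) G e sg (cur s0 p) s0 (fun h k => k = p ++ h)) with (k := p ++ h).
      * intros h' k -> Ha. left. rewrite shiftS_at in *. rewrite <- cur_app in Ha. split; [exact Ha|].
        rewrite <- app_assoc. reflexivity.
      * reflexivity.
      * apply (valid_T G e pl); auto. rewrite cur_app. exact Hp.
    + apply (T_agree G e _ sg). intros k. unfold shiftS.
      destruct (excluded_middle_informative _); [contradiction|reflexivity].
      apply (valid_T G e pl); auto.
Qed.

Fixpoint fsw (Q : list (trans L) -> Prop) (acc h : list (trans L))
  : option (list (trans L) * list (trans L)) :=
  if excluded_middle_informative (Q acc) then Some (acc, h) else
  match h with [] => None | a :: h' => fsw Q (acc ++ [a]) h' end.

Lemma fsw_some Q acc h p k : fsw Q acc h = Some (p, k) -> p ++ k = acc ++ h /\ Q p.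
Proof.
  revert acc; induction h as [|a h IH]; intros acc; simpl;
    destruct (excluded_middle_informative (Q acc)) as [Hq|Hq]; intros E; try discriminate.
  - inversion E; subst; auto.
  - inversion E; subst; auto.
  - destruct (IH _ E) as [E1 E2]. split; auto. rewrite E1, <- app_assoc. reflexivity.
Qed.

Lemma fsw_app Q acc h p k x : fsw Q acc h = Some (p, k) -> fsw Q acc (h ++ x) = Some (p, k ++ x).
Proof.
  revert acc; induction h as [|a h IH]; intros acc E.
  - simpl in E. destruct (excluded_middle_informative (Q acc)) as [Hq|Hq]; [|discriminate].
    inversion E; subst. destruct x; simpl; destruct (excluded_middle_informative (Q p)); try contradiction; reflexivity.
  - simpl in E |- *. destruct (excluded_middle_informative (Q acc)) as [Hq|Hq].
    + inversion E; subst; reflexivity.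
    + apply IH; auto.
Qed.

Lemma fsw_snoc_none Q acc h a : fsw Q acc h = None ->
  fsw Q acc (h ++ [a]) = None \/
  (fsw Q acc (h ++ [a]) = Some (acc ++ h ++ [a], []) /\ Q (acc ++ h ++ [a])).
Proof.
  revert acc; induction h as [|b h IH]; intros acc; simpl;
    destruct (excluded_middle_informative (Q acc)) as [Hq|Hq]; intros E; try discriminate.
  - destruct (excluded_middle_informative (Q (acc ++ [a]))); auto.
  - destruct (IH _ E) as [H|[H1 H2]]; auto. right. rewrite <- app_assoc in H1, H2. simpl in *. auto.
Qed.

Definition splice (base : strat L) (Q : L * R -> list (trans L) -> Prop)
  (tau : L * R -> list (trans L) -> strat L) : strat L := fun s0 h =>
  match fsw (Q s0) [] h with Some (p, k) => tau s0 p (cur s0 p) k | None => base s0 h end.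

Lemma splice_at base Q tau s0 p k : fsw (Q s0) [] p = Some (p, []) ->
  splice base Q tau s0 (p ++ k) = tau s0 p (cur s0 p) k.
Proof. intros E. unfold splice. rewrite (fsw_app _ _ _ _ _ k E). reflexivity. Qed.

Lemma splice_none base Q tau s0 h : fsw (Q s0) [] h = None -> splice base Q tau s0 h = base s0 h.
Proof. intros E. unfold splice. rewrite E. reflexivity. Qed.

Lemma splice_valid pl base Q tau : valid_strat G e pl base ->
  (forall s0 p, valid_strat G e pl (tau s0 p)) -> valid_strat G e pl (splice base Q tau).
Proof.
  intros Hb Ht.
  assert (TS : forall s0 h p k, fsw (Q s0) [] h = Some (p, k) -> gmin G (fst (cur s0 h)) = pl ->
            T G e (splice base Q tau) s0 h).
  { intros s0 h p k E Hp.
    refine (T_transfer G e (splice base Q tau) G e (tau s0 p) s0 (cur s0 p)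
             (fun h' k' => fsw (Q s0) [] h' = Some (p, k')) _ h k E _).
    - intros h' k' E' Ha. left. destruct (fsw_some _ _ _ _ _ E') as [Eh _]. simpl in Eh.
      unfold splice in *. rewrite E' in *. rewrite <- Eh, cur_app in Ha. split; [exact Ha|].
      apply fsw_app; auto.
    - destruct (fsw_some _ _ _ _ _ E) as [Eh _]. simpl in Eh.
      apply (valid_T G e pl); auto. rewrite <- cur_app, Eh. exact Hp. }
  apply valid_of.
  - intros s0 h Hp Hex. unfold splice. destruct (fsw (Q s0) [] h) as [[p k]|] eqn:E.
    + destruct (fsw_some _ _ _ _ _ E) as [Eh _]. simpl in Eh. rewrite <- Eh, cur_app in *.
      apply (proj1 (Ht s0 p)); auto.
    + apply (proj1 Hb); auto.
  - intros s0 h Hp. destruct (fsw (Q s0) [] h) as [[p k]|] eqn:E; [eapply TS; eauto|].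
    refine (T_transfer G e (splice base Q tau) G e base s0 s0
       (fun h' k' => h' = k' /\ fsw (Q s0) [] h' = None /\ gmin G (fst (cur s0 h')) = pl) _ h h
       (conj eq_refl (conj E Hp)) _).
    + intros h' k' [-> [E' Hp']] Ha. rewrite splice_none in * by exact E'.
      destruct (fsw_snoc_none _ [] k' (base s0 k') E') as [N|[S1 _]].
      * left. split; [exact Ha|]. split; [reflexivity|]. split; [exact N|].
        rewrite cur_snoc, fst_step_delay; [exact Hp'|apply Ha].
      * right. eapply TS; [exact S1|]. rewrite cur_snoc, fst_step_delay; [exact Hp'|apply Ha].
    + apply (valid_T G e pl); auto.
Qed.

Definition first_then (s : L * R) (c0 : trans L) : strat L := fun s0 h =>
  if excluded_middle_informative (s0 = s /\ h = []) then c0 else dflt s0 h.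

Lemma first_then_valid pl s c0 : avail G e s c0 -> valid_strat G e pl (first_then s c0).
Proof.
  intros Hc. apply valid_of.
  - intros s0 h _ Hex. unfold first_then. destruct (excluded_middle_informative _) as [[-> ->]|_].
    + exact Hc.
    + apply dflt_avail; auto.
  - intros s0 h _.
    assert (Ag : forall s0 h, ~ (s0 = s /\ h = []) -> T G e (first_then s c0) s0 h).
    { intros s1 h1 Hn. apply (T_agree G e _ dflt); [|apply dflt_T].
      intros k. unfold first_then. destruct (excluded_middle_informative _) as [[E1 E2]|]; [|reflexivity].
      exfalso. apply Hn. split; auto. destruct h1; [reflexivity|discriminate]. }
    destruct (classic (s0 = s /\ h = [])) as [[-> ->]|Hn]; [|apply Ag; auto].
    destruct (classic (adelay G e (cur s []) (first_then s c0 s []))) as [Ha|Ha].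
    + apply T_step. apply Ag. intros [_ E]. destruct (first_then s c0 s []); discriminate.
    + apply T_now. exact Ha.
Qed.

Lemma first_then_at s c0 : first_then s c0 s [] = c0.
Proof. unfold first_then. destruct (excluded_middle_informative _) as [_|n]; auto. exfalso; auto. Qed.

Definition pick_counter (s : L * R) (mu : strat L) (w : R) : strat L :=
  epsilon (inhabits dflt) (fun chi => valid_strat G e false chi /\
    ((exists chi', valid_strat G e false chi' /\ ~ cost_le G e s mu chi' w) -> ~ cost_le G e s mu chi w)).

Lemma pick_counter_spec s mu w : valid_strat G e false (pick_counter s mu w) /\
  ((exists chi', valid_strat G e false chi' /\ ~ cost_le G e s mu chi' w) ->
     ~ cost_le G e s mu (pick_counter s mu w) w).
Proof.
  unfold pick_counter. apply epsilon_spec.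
  destruct (classic (exists chi', valid_strat G e false chi' /\ ~ cost_le G e s mu chi' w)) as [H|H].
  - destruct H as [chi [H1 H2]]. exists chi. auto.
  - exists dflt. split; [apply dflt_valid|]. intros H'. contradiction.
Qed.

Definition pick_min (s : L * R) (w : R) : strat L :=
  epsilon (inhabits dflt) (fun mu => valid_strat G e true mu /\
    ((exists mu', valid_strat G e true mu' /\
        forall chi, valid_strat G e false chi -> cost_le G e s mu' chi w) ->
     forall chi, valid_strat G e false chi -> cost_le G e s mu chi w)).

Lemma pick_min_spec s w : valid_strat G e true (pick_min s w) /\
    ((exists mu', valid_strat G e true mu' /\
        forall chi, valid_strat G e false chi -> cost_le G e s mu' chi w) ->
     forall chi, valid_strat G e false chi -> cost_le G e s (pick_min s w) chi w).
Proof.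
  unfold pick_min. apply epsilon_spec.
  destruct (classic (exists mu', valid_strat G e true mu' /\
        forall chi, valid_strat G e false chi -> cost_le G e s mu' chi w)) as [H|H].
  - destruct H as [mu [H1 H2]]. exists mu. auto.
  - exists dflt. split; [apply dflt_valid|]. intros H'. contradiction.
Qed.

End Gen2.

Section Gen3.
Context {L : Type} (G : Game L) (e : R).

Lemma play_split mu chi s0 n p mu' chi' :
  play G mu chi s0 n = p ->
  (forall k, mu s0 (p ++ k) = mu' (cur s0 p) k) ->
  (forall k, chi s0 (p ++ k) = chi' (cur s0 p) k) ->
  forall m, play G mu chi s0 (n + m) = p ++ play G mu' chi' (cur s0 p) m.
Proof.
  intros Hp Hmu Hchi m. induction m as [|m IH].
  - rewrite Nat.add_0_r, app_nil_r. exact Hp.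
  - rewrite Nat.add_succ_r. simpl. rewrite IH. rewrite cur_app, Hmu, Hchi, app_assoc. reflexivity.
Qed.

Lemma reaches_split mu chi s0 n p mu' chi' m c :
  play G mu chi s0 n = p ->
  (forall k, mu s0 (p ++ k) = mu' (cur s0 p) k) ->
  (forall k, chi s0 (p ++ k) = chi' (cur s0 p) k) ->
  reaches G e s0 mu chi (n + m) c -> reaches G e (cur s0 p) mu' chi' m (c - hprice G s0 p).
Proof.
  intros Hp Hmu Hchi [[g [Hg Hc]] Hpre].
  pose proof (play_split _ _ _ _ _ _ _ Hp Hmu Hchi) as PS.
  rewrite PS, cur_app in Hg, Hc. rewrite hprice_app in Hc.
  split.
  - exists g. split; [exact Hg|]. lra.
  - intros m' Hm'. destruct (Hpre (n + m')%nat ltac:(lia)) as [H1 H2].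
    rewrite PS, cur_app in H1, H2. auto.
Qed.

Lemma reaches_join mu chi s0 n p mu' chi' m c :
  play G mu chi s0 n = p ->
  (forall k, mu s0 (p ++ k) = mu' (cur s0 p) k) ->
  (forall k, chi s0 (p ++ k) = chi' (cur s0 p) k) ->
  (forall m', (m' < n)%nat -> ggoal G (fst (cur s0 (play G mu chi s0 m'))) = None /\
     exists tr, avail G e (cur s0 (play G mu chi s0 m')) tr) ->
  reaches G e (cur s0 p) mu' chi' m c -> reaches G e s0 mu chi (n + m) (hprice G s0 p + c).
Proof.
  intros Hp Hmu Hchi Hpre [[g [Hg Hc]] Hsub].
  pose proof (play_split _ _ _ _ _ _ _ Hp Hmu Hchi) as PS.
  split.
  - exists g. rewrite PS, cur_app, hprice_app. split; [exact Hg|]. lra.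
  - intros m' Hm'. destruct (Nat.lt_ge_cases m' n) as [Hl|Hl]; [auto|].
    replace m' with (n + (m' - n))%nat by lia. rewrite PS, cur_app. apply Hsub. lia.
Qed.

Lemma reaches_pos mu chi s0 n c : reaches G e s0 mu chi n c -> ggoal G (fst s0) = None -> (0 < n)%nat.
Proof.
  intros [[g [Hg _]] _] Hn. destruct n; [|lia]. simpl in Hg. rewrite Hn in Hg. discriminate.
Qed.

Lemma avail_exists b s v : isOptCost G b e s v -> ggoal G (fst s) = None -> exists tr, avail G e s tr.
Proof.
  intros [_ [H2 _]] Hn. destruct (H2 1 ltac:(lra)) as [mu [_ Hc]].
  destruct (Hc (dflt G e) (dflt_valid G e false)) as [n [c [Hr _]]].
  pose proof (reaches_pos _ _ _ _ _ Hr Hn) as Hp. destruct Hr as [_ Hpre].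
  destruct (Hpre O Hp) as [_ H]. exact H.
Qed.

Lemma isopt_not_lt b b' s v v' : isOptCost G b e s v -> isOptCost G b' e s v' -> ~ v < v'.
Proof.
  intros [_ [H2 _]] [_ [_ H3]] Hlt.
  destruct (H2 ((v' - v) / 2) ltac:(lra)) as [mu [Hmu Hc]].
  destruct (H3 mu Hmu (v + (v' - v) / 2) ltac:(lra)) as [chi [Hchi Hn]].
  apply Hn. apply Hc. exact Hchi.
Qed.

Lemma isopt_unique b b' s v v' : isOptCost G b e s v -> isOptCost G b' e s v' -> v = v'.
Proof.
  intros H H'. pose proof (isopt_not_lt _ _ _ _ _ H H'). pose proof (isopt_not_lt _ _ _ _ _ H' H). lra.
Qed.

Lemma play_one_first (mu chi : strat L) (s : L * R) (c0 : trans L) (Q : L * R -> list (trans L) -> Prop) (tau' : L * R -> list (trans L) -> strat L) :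
  (gmin G (fst s) = true -> mu s [] = c0) ->
  ~ Q s [] ->
  (gmin G (fst s) = false ->
     chi = splice (first_then G e s c0) Q tau') ->
  play G mu chi s 1 = [c0].
Proof.
  intros H1 HQ H2. simpl. destruct (gmin G (fst s)) eqn:E.
  - rewrite H1; auto.
  - rewrite H2 by auto. rewrite splice_none. { rewrite first_then_at. reflexivity. }
    simpl. destruct (excluded_middle_informative (Q s [])); [contradiction|reflexivity].
Qed.

Lemma fsw_single (Q : list (trans L) -> Prop) c0 : ~ Q [] -> Q [c0] -> fsw Q [] [c0] = Some ([c0], []).
Proof.
  intros H1 H2. simpl. destruct (excluded_middle_informative (Q [])); [contradiction|].
  simpl. destruct (excluded_middle_informative (Q [c0])); [reflexivity|contradiction].
Qed.

Lemma counter_after_first b s s' mu c0 W w :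
  valid_strat G e true mu -> ggoal G (fst s) = None -> avail G e s c0 ->
  (gmin G (fst s) = true -> mu s [] = c0) -> step s c0 = s' ->
  isOptCost G b e s' W -> w < tprice G s c0 + W ->
  exists chi, valid_strat G e false chi /\ ~ cost_le G e s mu chi w.
Proof.
  intros Hmu Hng Hav Hfirst Hstep [_ [_ H3]] Hw.
  pose (mu' := shiftS mu s [c0]).
  destruct (H3 mu' (shiftS_valid G e true mu s [c0] Hmu) (w - tprice G s c0) ltac:(lra))
    as [chi' [Hchi' Hnc]].
  pose (Q := fun (s0 : L * R) (p : list (trans L)) => s0 = s /\ p = [c0]).
  pose (chi := splice (first_then G e s c0) Q (fun _ _ => chi')).
  exists chi. split.
  - apply splice_valid; auto. apply first_then_valid; auto.
  - intros [n [c [Hr Hc]]].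
    assert (P1 : play G mu chi s 1 = [c0]).
    { apply (play_one_first _ _ _ _ Q (fun _ _ => chi')); auto. intros [_ E]; discriminate. }
    assert (F : fsw (Q s) [] [c0] = Some ([c0], [])).
    { apply fsw_single; unfold Q; [intros [_ E]; discriminate| auto]. }
    pose proof (reaches_pos _ _ _ _ _ Hr Hng) as Hpos.
    destruct n as [|m]; [lia|].
    change (S m) with (1 + m)%nat in Hr.
    apply (reaches_split _ _ _ 1 [c0] mu' chi') in Hr; auto.
    + apply Hnc. exists m, (c - hprice G s [c0]). simpl in Hr |- *. rewrite Hstep in Hr.
      split; [exact Hr|]. lra.
    + intros k. unfold mu'. rewrite shiftS_at. reflexivity.
    + intros k. unfold chi. rewrite splice_at; auto.
Qed.

Lemma min_after_first s s' c0 W :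
  gmin G (fst s) = true -> ggoal G (fst s) = None -> avail G e s c0 -> step s c0 = s' ->
  (exists mu', valid_strat G e true mu' /\
     forall chi, valid_strat G e false chi -> cost_le G e s' mu' chi W) ->
  exists mu, valid_strat G e true mu /\
     forall chi, valid_strat G e false chi -> cost_le G e s mu chi (tprice G s c0 + W).
Proof.
  intros Hmin Hng Hav Hstep [mu' [Hmu' Hc']].
  pose (Q := fun (s0 : L * R) (p : list (trans L)) => s0 = s /\ p = [c0]).
  pose (mu := splice (first_then G e s c0) Q (fun _ _ => mu')).
  exists mu. split.
  - apply splice_valid; auto. apply first_then_valid; auto.
  - intros chi Hchi.
    pose (chi' := shiftS chi s [c0]).
    destruct (Hc' chi' (shiftS_valid G e false chi s [c0] Hchi)) as [m [c [Hr Hc]]].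
    assert (F : fsw (Q s) [] [c0] = Some ([c0], [])).
    { apply fsw_single; unfold Q; [intros [_ E]; discriminate| auto]. }
    assert (P1 : play G mu chi s 1 = [c0]).
    { simpl. rewrite Hmin. unfold mu. rewrite splice_none. { rewrite first_then_at. reflexivity. }
      simpl. destruct (excluded_middle_informative (Q s [])) as [[_ E]|]; [discriminate|reflexivity]. }
    exists (1 + m)%nat, (hprice G s [c0] + c). split.
    + apply (reaches_join _ _ _ 1 [c0] mu' chi'); auto.
      * intros k. unfold mu. rewrite splice_at; auto.
      * intros k. unfold chi'. rewrite shiftS_at. reflexivity.
      * intros m' Hm'. assert (m' = O) by lia. subst m'. simpl. split; [exact Hng|eauto].
      * simpl. rewrite Hstep. exact Hr.
    + simpl. lra.
Qed.

Lemma min_delay_ineq b b' l1 y z Vy Wz :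
  gmin G l1 = true -> ggoal G l1 = None -> gurg G l1 = false -> y < z -> z <= e ->
  isOptCost G b e (l1, y) Vy -> isOptCost G b' e (l1, z) Wz ->
  Vy <= INR (gprice G l1) * (z - y) + Wz.
Proof.
  intros Hm Hg Hu Hyz Hze HV HW. apply Rnot_lt_le. intros Hlt.
  set (d := Vy - (INR (gprice G l1) * (z - y) + Wz)).
  destruct HW as [_ [H2 _]]. destruct (H2 (d / 2) ltac:(unfold d; lra)) as [mu' [Hmu' Hc']].
  destruct (min_after_first (l1, y) (l1, z) (Delay (z - y)) (Wz + d / 2)) as [mu [Hmu Hc]]; auto.
  - simpl. repeat split; auto; lra.
  - simpl. f_equal. ring.
  - eauto.
  - destruct HV as [_ [_ H3]].
    destruct (H3 mu Hmu (tprice G (l1, y) (Delay (z - y)) + (Wz + d / 2))) as [chi [Hchi Hn]].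
    + simpl. unfold d in *. lra.
    + apply Hn, Hc, Hchi.
Qed.

Lemma max_delay_ineq b b' l1 y z Vy Wz :
  gmin G l1 = false -> ggoal G l1 = None -> gurg G l1 = false -> y < z -> z <= e ->
  isOptCost G b e (l1, y) Vy -> isOptCost G b' e (l1, z) Wz ->
  INR (gprice G l1) * (z - y) + Wz <= Vy.
Proof.
  intros Hm Hg Hu Hyz Hze HV HW. apply Rnot_lt_le. intros Hlt.
  set (d := INR (gprice G l1) * (z - y) + Wz - Vy).
  destruct HV as [HV1 [H2 H3]]. destruct (H2 (d / 2) ltac:(unfold d; lra)) as [mu [Hmu Hc]].
  destruct (counter_after_first b' (l1, y) (l1, z) mu (Delay (z - y)) Wz (Vy + d / 2))
    as [chi [Hchi Hn]].
  - exact Hmu.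
  - exact Hg.
  - simpl. repeat split; auto; lra.
  - simpl. intros E. rewrite Hm in E. discriminate.
  - simpl. f_equal. ring.
  - exact HW.
  - simpl. unfold d in *. lra.
  - apply Hn, Hc, Hchi.
Qed.

End Gen3.

Lemma play_S {L : Type} (G : Game L) mu chi s0 n :
  play G mu chi s0 (S n) = play G mu chi s0 n ++
    [if gmin G (fst (cur s0 (play G mu chi s0 n))) then mu s0 (play G mu chi s0 n)
     else chi s0 (play G mu chi s0 n)].
Proof. reflexivity. Qed.

Lemma cost_le_mono {L : Type} (G : Game L) e s mu chi w w' :
  cost_le G e s mu chi w -> w <= w' -> cost_le G e s mu chi w'.
Proof. intros [n [c [H1 H2]]] H. exists n, c. split; auto. lra. Qed.

Lemma fsw_none_not {L : Type} (Q : list (trans L) -> Prop) acc h : fsw Q acc h = None -> ~ Q (acc ++ h).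
Proof.
  revert acc; induction h as [|a h IH]; intros acc E; simpl in E;
    destruct (excluded_middle_informative (Q acc)) as [Hq|Hq]; try discriminate.
  - rewrite app_nil_r. exact Hq.
  - specialize (IH _ E). rewrite <- app_assoc in IH. exact IH.
Qed.

Lemma fsw_nil_cases {L : Type} (Q : list (trans L) -> Prop) :
  fsw Q [] [] = None \/ fsw Q [] [] = Some ([], []).
Proof. simpl. destruct (excluded_middle_informative (Q [])); auto. Qed.

Lemma fsw_play_cases {L : Type} (Q : list (trans L) -> Prop) (hh : nat -> list (trans L)) n :
  hh O = [] -> (forall m, exists a, hh (S m) = hh m ++ [a]) ->
  (forall m, (m < n)%nat -> fsw Q [] (hh m) = None) ->
  fsw Q [] (hh n) = None \/ (fsw Q [] (hh n) = Some (hh n, []) /\ Q (hh n)).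
Proof.
  intros H0 HS Hlt. destruct n as [|n].
  - rewrite H0. destruct (fsw_nil_cases Q) as [E|E]; auto. right. split; auto.
    apply (fsw_some Q [] [] [] []) in E. tauto.
  - destruct (HS n) as [a Ha]. rewrite Ha. pose proof (fsw_snoc_none Q [] (hh n) a (Hlt n ltac:(lia))) as X. simpl in X. exact X.
Qed.

Lemma opt_spec {L : Type} (G : Game L) b e s :
  (exists v, isOptCost G b e s v) -> isOptCost G b e s (OptCost G b e s).
Proof. intros H. unfold OptCost. apply epsilon_spec. exact H. Qed.

Lemma nonurgent_prop {L : Type} (G : Game L) l :
  nonurgentb G l = true -> ggoal G l = None /\ gurg G l = false.
Proof. unfold nonurgentb. destruct (ggoal G l); [discriminate|]. destruct (gurg G l); simpl; auto. Qed.

Lemma nonurgent_of {L : Type} (G : Game L) l :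
  ggoal G l = None -> gurg G l = false -> nonurgentb G l = true.
Proof. unfold nonurgentb. intros -> ->. reflexivity. Qed.

Section CCsec.
Context {L : Type} (G : Game L) (r e2 : R) (Hre : r <= e2).

Let CC := CostConsistent G r e2.

Definition embT (tr : trans L) : trans (CCLoc G) :=
  match tr with Disc l => Disc (inl l) | Delay t => Delay t end.
Definition embS (s : L * R) : CCLoc G * R := (inl (fst s), snd s).

Lemma step_emb s tr : step (embS s) (embT tr) = embS (step s tr).
Proof. destruct tr; reflexivity. Qed.

Lemma cur_emb s h : cur (embS s) (map embT h) = embS (cur s h).
Proof.
  revert s; induction h as [|a h IH]; intros s; [reflexivity|].
  simpl. unfold cur in *. simpl. rewrite step_emb. apply IH.
Qed.

Lemma hprice_emb s h : hprice CC (embS s) (map embT h) = hprice G s h.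
Proof.
  revert s; induction h as [|a h IH]; intros s; [reflexivity|].
  simpl. rewrite step_emb, IH. destruct a; reflexivity.
Qed.

Lemma avail_emb e s tr : avail CC e (embS s) (embT tr) <-> avail G e s tr.
Proof. destruct tr; simpl; tauto. Qed.

Lemma gmin_emb s : gmin CC (fst (embS s)) = gmin G (fst s).
Proof. reflexivity. Qed.

Lemma ggoal_emb s : ggoal CC (fst (embS s)) = ggoal G (fst s).
Proof. reflexivity. Qed.

Fixpoint unembH (k : list (trans (CCLoc G))) : option (list (trans L)) :=
  match k with
  | [] => Some []
  | Disc (inl l) :: k' => option_map (cons (Disc l)) (unembH k')
  | Disc (inr _) :: _ => None
  | Delay t :: k' => option_map (cons (Delay t)) (unembH k')
  end.

Lemma unembH_map h : unembH (map embT h) = Some h.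
Proof. induction h as [|[l|t] h IH]; simpl; try rewrite IH; reflexivity. Qed.

Lemma unembH_some k h : unembH k = Some h -> k = map embT h.
Proof.
  revert h; induction k as [|[[l|b]|t] k IH]; intros h E; simpl in E.
  - inversion E; reflexivity.
  - destruct (unembH k) eqn:U; simpl in E; inversion E; subst. simpl. f_equal. apply IH; auto.
  - discriminate.
  - destruct (unembH k) eqn:U; simpl in E; inversion E; subst. simpl. f_equal. apply IH; auto.
Qed.

Lemma unembH_none k x : unembH k = None -> unembH (k ++ x) = None.
Proof.
  induction k as [|[[l|b]|t] k IH]; intros E; simpl in *; try discriminate; try reflexivity.
  - destruct (unembH k); [discriminate|]. rewrite IH; reflexivity.
  - destruct (unembH k); [discriminate|]. rewrite IH; reflexivity.
Qed.

Definition toInr (l : L) : trans (CCLoc G) :=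
  match excluded_middle_informative (nonurgentb G l = true) with
  | left H => Disc (inr (exist _ l H))
  | right _ => Delay 0
  end.

Lemma toInr_spec l : nonurgentb G l = true ->
  exists b, toInr l = Disc (inr b) /\ proj1_sig b = l.
Proof.
  intros H. unfold toInr. destruct (excluded_middle_informative _) as [H'|H']; [|contradiction].
  eexists; split; reflexivity.
Qed.

Lemma toInr_cases l : (exists b, toInr l = Disc (inr b)) \/ toInr l = Delay 0.
Proof. unfold toInr. destruct (excluded_middle_informative _); eauto. Qed.

Definition convA (s : L * R) (c : trans L) : trans (CCLoc G) :=
  match c with
  | Disc l => Disc (inl l)
  | Delay t => if Rle_dec (snd s + t) r then Delay t else toInr (fst s)
  end.

Definition liftC_in (sg : strat L) : strat (CCLoc G) := fun sC hC => match fst sC with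
    | inl l0 => match unembH hC with
                | Some h => convA (cur (l0, snd sC) h) (sg (l0, snd sC) h)
                | None => dflt CC r sC hC end
    | inr _ => dflt CC r sC hC end.

Definition liftC (sg : strat L) : strat (CCLoc G) := wrap CC r (liftC_in sg).

Lemma liftC_at sg s h : avail CC r (embS (cur s h)) (convA (cur s h) (sg s h)) ->
  liftC sg (embS s) (map embT h) = convA (cur s h) (sg s h).
Proof.
  intros Ha. unfold liftC, wrap, liftC_in. simpl. rewrite unembH_map. destruct s as [l0 x0]. simpl.
  rewrite cur_emb. destruct (excluded_middle_informative _) as [_|n]; [reflexivity|contradiction].
Qed.

Lemma wrap_same {M : Type} (G' : Game M) e sg s0 h : sg s0 h = dflt G' e s0 h -> wrap G' e sg s0 h = dflt G' e s0 h.
Proof. intros E. unfold wrap. destruct (excluded_middle_informative _); auto. Qed.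

Lemma liftC_valid pl sg : valid_strat G e2 pl sg -> valid_strat CC r pl (liftC sg).
Proof.
  intros Hv. apply valid_of.
  - intros. apply wrap_avail. auto.
  - intros [[l0|b0] x0] hC Hp.
    + destruct (unembH hC) as [h|] eqn:U.
      * apply unembH_some in U. subst hC.
        refine (T_transfer CC r (liftC sg) G e2 sg (inl l0, x0) (l0, x0)
                  (fun hC' k => hC' = map embT k) _ (map embT h) h eq_refl _).
        -- intros hC' k -> Ha. change (inl l0, x0) with (embS (l0, x0)) in *.
           destruct (wrap_cases CC r (liftC_in sg) (embS (l0, x0)) (map embT k)) as [[E Hav]|E];
             unfold liftC in Ha |- *; rewrite E in Ha |- *.
           ++ unfold liftC_in in Ha |- *. simpl in Ha |- *. rewrite unembH_map in Ha |- *.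
              destruct (sg (l0, x0) k) as [l'|t] eqn:Es; simpl in Ha.
              ** destruct Ha as [[] _].
              ** destruct (Rle_dec _ r) as [Hle|Hle].
                 --- left. destruct Ha as [_ Ha]. rewrite cur_emb in Ha. simpl in Ha.
                     split; [split; [exact I|]|].
                     +++ simpl. destruct Ha as [A1 [A2 A3]]. repeat split; auto; lra.
                     +++ rewrite map_app. simpl. destruct (Rle_dec _ r); [reflexivity|contradiction].
                 --- destruct (toInr_cases (fst (cur (l0, x0) k))) as [[b Eb]|Eb];
                       rewrite Eb in Ha; simpl in Ha.
                     +++ destruct Ha as [[] _].
                     +++ destruct Ha as [_ [A _]]. lra.
           ++ right. apply dflt_next_T. exact Ha.
        -- apply (valid_T G e2 pl); auto. rewrite <- Hp. change (inl l0, x0) with (embS (l0, x0)).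
           rewrite cur_emb. reflexivity.
      * apply (T_agree CC r _ (dflt CC r)); [|apply dflt_T].
        intros k. unfold liftC. apply wrap_same. unfold liftC_in. simpl. rewrite unembH_none; auto.
    + apply (T_agree CC r _ (dflt CC r)); [|apply dflt_T].
      intros k. unfold liftC. apply wrap_same. unfold liftC_in. reflexivity.
Qed.

Definition unconv (c : trans (CCLoc G)) : trans L :=
  match c with Disc (inl l) => Disc l | Disc (inr _) => Delay 0 | Delay t => Delay t end.

Definition lowerG_in (sg : strat (CCLoc G)) : strat L := fun s h =>
    if excluded_middle_informative (avail CC r (embS (cur s h)) (sg (embS s) (map embT h)))
    then unconv (sg (embS s) (map embT h)) else dflt G e2 s h.

Definition lowerG (sg : strat (CCLoc G)) : strat L := wrap G e2 (lowerG_in sg).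

Lemma lowerG_valid pl sg : valid_strat CC r pl sg -> valid_strat G e2 pl (lowerG sg).
Proof.
  intros Hv. apply valid_of.
  - intros. apply wrap_avail. auto.
  - intros s h Hp.
    refine (T_transfer G e2 (lowerG sg) CC r sg s (embS s)
              (fun h' k => k = map embT h') _ h (map embT h) eq_refl _).
    + intros h' k -> Ha.
      destruct (wrap_cases G e2 (lowerG_in sg) s h') as [[E Hav]|E]; unfold lowerG in Ha |- *; rewrite E in Ha |- *.
      * unfold lowerG_in in Ha |- *. destruct (excluded_middle_informative _) as [Hc|Hc].
        -- destruct (sg (embS s) (map embT h')) as [[l'|b]|t] eqn:Es; simpl in Ha.
           ++ destruct Ha as [[] _].
           ++ destruct Ha as [_ [A _]]. lra.
           ++ left. split.
              ** split; [exact I|]. rewrite cur_emb. exact Hc.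
              ** rewrite map_app. reflexivity.
        -- right. apply dflt_next_T. exact Ha.
      * right. apply dflt_next_T. exact Ha.
    + apply (valid_T CC r pl); auto. rewrite cur_emb. exact Hp.
Qed.

Lemma avail_G_CC e s tr : avail G e s tr -> ggoal G (fst s) = None ->
  exists trC, avail CC r (embS s) trC.
Proof.
  intros Ha Hg. destruct tr as [l'|t].
  - exists (Disc (inl l')). exact Ha.
  - destruct Ha as [_ [Hu _]]. pose proof (nonurgent_of G _ Hg Hu) as Hn.
    exists (Disc (inr (exist _ (fst s) Hn))). reflexivity.
Qed.

End CCsec.

Section Env.
Context {L : Type} (G : Game L) (b1 r e2 : R)
  (HG : forall b e, 0 <= b -> b <= e -> e <= 1 ->
     forall (l : L) (x : R), b <= x <= e -> exists v, isOptCost G b e (l, x) v)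
  (Hb1 : 0 <= b1) (Hb1r : b1 <= r) (Hre : r <= e2) (He2 : e2 <= 1).

Lemma Wspec l1 z : r <= z <= e2 -> isOptCost G r e2 (l1, z) (OptCost G r e2 (l1, z)).
Proof. intros Hz. apply opt_spec. apply HG; lra. Qed.

Lemma Vspec l1 : isOptCost G r e2 (l1, r) (OptCost G r e2 (l1, r)).
Proof. apply Wspec. lra. Qed.

Lemma Gavail (st : L * R) : 0 <= snd st <= e2 -> ggoal G (fst st) = None -> exists tr, avail G e2 st tr.
Proof.
  intros Hy Hg. destruct st as [l1 y].
  destruct (HG y e2 ltac:(simpl in *; lra) ltac:(simpl in *; lra) He2 l1 y ltac:(simpl in *; lra)) as [v Hv].
  eapply avail_exists; eauto.
Qed.

Lemma ggoal_inr b : ggoal (CostConsistent G r e2) (inr b) =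
  Some (fun x => OptCost G r e2 (proj1_sig b, r) + (r - x) * INR (gprice G (proj1_sig b))).
Proof. reflexivity. Qed.

Section PartA.
Context (l : L) (x : R) (Hx : b1 <= x <= r) (eps : R) (Heps : 0 < eps)
  (muG : strat L) (HmuG : valid_strat G e2 true muG)
  (chiC : strat (CCLoc G)) (HchiC : valid_strat (CostConsistent G r e2) r false chiC).

Definition sA : L * R := (l, x).

Definition QA (s0 : L * R) (p : list (trans L)) : Prop :=
  (gmin G (fst (cur s0 p)) = true /\ exists t, muG s0 p = Delay t /\ r < snd (cur s0 p) + t) \/
  (gmin G (fst (cur s0 p)) = false /\ exists b, chiC (embS G s0) (map (embT G) p) = Disc (inr b)).

Definition wA (st : L * R) : R :=
  (r - snd st) * INR (gprice G (fst st)) + OptCost G r e2 (fst st, r) - eps / 2.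

Definition tauA (s0 : L * R) (p : list (trans L)) : strat L :=
  pick_counter G e2 (cur s0 p) (shiftS muG s0 p) (wA (cur s0 p)).

Definition chiG : strat L := splice (lowerG G r e2 chiC) QA tauA.

Lemma chiG_valid : valid_strat G e2 false chiG.
Proof. apply splice_valid. - apply lowerG_valid; auto. - intros. apply pick_counter_spec. Qed.

Definition hG n := play G muG chiG sA n.
Definition hC n := play (CostConsistent G r e2) (liftC G r e2 muG) chiC (embS G sA) n.

Definition InvA n :=
  (forall m, (m <= n)%nat -> hC m = map (embT G) (hG m) /\ 0 <= snd (cur sA (hG m)) <= r) /\
  (forall m, (m < n)%nat -> fsw (QA sA) [] (hG m) = None).

Definition GOODA w := cost_le (CostConsistent G r e2) r (embS G sA) (liftC G r e2 muG) chiC w.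

Lemma hG_S n : hG (S n) = hG n ++ [if gmin G (fst (cur sA (hG n))) then muG sA (hG n) else chiG sA (hG n)].
Proof. reflexivity. Qed.

Lemma hC_S n : hC (S n) = hC n ++
  [if gmin (CostConsistent G r e2) (fst (cur (embS G sA) (hC n))) then liftC G r e2 muG (embS G sA) (hC n)
   else chiC (embS G sA) (hC n)].
Proof. reflexivity. Qed.

Section WithRun.
Context (N : nat) (c : R) (Hr : reaches G e2 sA muG chiG N c)
  (Hc : c <= OptCost G b1 e2 sA + eps / 2).

Lemma Gfacts m : (m < N)%nat -> ggoal G (fst (cur sA (hG m))) = None /\
   exists tr, avail G e2 (cur sA (hG m)) tr.
Proof. intros Hm. destruct Hr as [_ H]. apply H. exact Hm. Qed.

Lemma CCfacts n m : InvA n -> (m <= n)%nat -> (m < N)%nat ->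
  ggoal (CostConsistent G r e2) (fst (cur (embS G sA) (hC m))) = None /\
  exists tr, avail (CostConsistent G r e2) r (cur (embS G sA) (hC m)) tr.
Proof.
  intros [I1 _] Hmn HmN. destruct (I1 m Hmn) as [E _]. rewrite E, cur_emb.
  destruct (Gfacts m HmN) as [Hg [tr Ha]]. split; [exact Hg|].
  eapply avail_G_CC; eauto.
Qed.

Lemma SW n b : (n < N)%nat -> InvA n -> fsw (QA sA) [] (hG n) = Some (hG n, []) ->
  hC (S n) = hC n ++ [Disc (inr b)] -> proj1_sig b = fst (cur sA (hG n)) ->
  (exists chi, valid_strat G e2 false chi /\
     ~ cost_le G e2 (cur sA (hG n)) (shiftS muG sA (hG n)) chi (wA (cur sA (hG n)))) ->
  GOODA (OptCost G b1 e2 sA + eps).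
Proof.
  intros HnN HI HF HS Hb Hex.
  set (h := hG n) in *. set (st := cur sA h) in *.
  assert (Hnc := proj2 (pick_counter_spec G e2 st (shiftS muG sA h) (wA st)) Hex).
  assert (Hsub : reaches G e2 st (shiftS muG sA h) (tauA sA h) (N - n) (c - hprice G sA h)).
  { apply (reaches_split G e2 muG chiG sA n h); auto.
    - intros k. rewrite shiftS_at. reflexivity.
    - intros k. unfold chiG. rewrite splice_at; auto.
    - replace (n + (N - n))%nat with N by lia. exact Hr. }
  assert (Hlt : wA st < c - hprice G sA h).
  { apply Rnot_le_lt. intros Hle. apply Hnc. exists (N - n)%nat, (c - hprice G sA h). split; auto. }
  exists (S n), (OptCost G r e2 (fst st, r) + (r - snd st) * INR (gprice G (fst st)) + hprice G sA h).
  split.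
  - split.
    + fold (hC (S n)). rewrite HS, cur_snoc. destruct HI as [I1 _]. destruct (I1 n (le_n n)) as [E _].
      fold h in E. rewrite E, cur_emb. simpl. eexists. split; [reflexivity|].
      rewrite hprice_app, hprice_emb, cur_emb. simpl. rewrite Hb. fold st. ring.
    + intros m Hm. fold (hC m). apply (CCfacts n); auto; lia.
  - unfold wA in Hlt. lra.
Qed.

Lemma stepSome n : (n < N)%nat -> InvA n -> fsw (QA sA) [] (hG n) = Some (hG n, []) ->
  QA sA (hG n) -> GOODA (OptCost G b1 e2 sA + eps).
Proof.
  intros HnN HI HF HQ. destruct (Gfacts n HnN) as [Hng Hav].
  assert (HI' := HI). destruct HI' as [I1 _]. destruct (I1 n (le_n n)) as [EC Ht].
  set (h := hG n) in *. set (st := cur sA h) in *.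
  destruct HQ as [[Hmin [t [Et Hrt]]]|[Hmax [b Eb]]]; try fold st in Hmin, Hrt; try fold st in Hmax.
  -
    assert (Hat : avail G e2 st (Delay t)).
    { rewrite <- Et. apply (proj1 HmuG); auto. }
    destruct Hat as [Ht0 [Hu Hte]].
    pose proof (nonurgent_of G _ Hng Hu) as Hnu.
    destruct (toInr_spec G _ Hnu) as [b [Eb Hb]].
    assert (Hlift : liftC G r e2 muG (embS G sA) (map (embT G) h) = Disc (inr b)).
    { rewrite liftC_at; fold h; fold st.
      - rewrite Et. unfold convA. destruct (Rle_dec _ r); [lra|]. exact Eb.
      - rewrite Et. unfold convA. destruct (Rle_dec _ r); [lra|]. rewrite Eb. exact Hb. }
    apply (SW n b); auto.
    + rewrite hC_S. rewrite EC, cur_emb. simpl (fst (embS G _)). simpl. fold st. rewrite Hmin. rewrite Hlift. reflexivity.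
    + assert (Hi : OptCost G r e2 (fst st, r) <=
                   INR (gprice G (fst st)) * (snd st + t - r) + OptCost G r e2 (fst st, snd st + t)).
      { apply (min_delay_ineq G e2 r r (fst st) r (snd st + t)); auto; try lra;
          [apply Vspec|apply Wspec; lra]. }
      eapply counter_after_first with (b := r) (s' := (fst st, snd st + t)) (c0 := Delay t)
          (W := OptCost G r e2 (fst st, snd st + t)).
      * apply shiftS_valid; auto.
      * exact Hng.
      * repeat split; auto.
      * intros _. unfold st. rewrite shiftS_at, app_nil_r. exact Et.
      * reflexivity.
      * apply Wspec; lra.
      * unfold wA. simpl. fold h. fold st.
        assert (INR (gprice G (fst st)) * (snd st + t - r) + (r - snd st) * INR (gprice G (fst st))
                   = INR (gprice G (fst st)) * t) by ring. lra.
  -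
    assert (HCav : exists trC, avail (CostConsistent G r e2) r (cur (embS G sA) (map (embT G) h)) trC).
    { rewrite cur_emb. destruct Hav as [tr Htr]. eapply avail_G_CC; eauto. }
    assert (Hab := proj1 HchiC (embS G sA) (map (embT G) h)).
    rewrite cur_emb in Hab. specialize (Hab Hmax). rewrite cur_emb in HCav. specialize (Hab HCav).
    rewrite Eb in Hab. simpl in Hab. fold st in Hab.
    pose proof (proj2_sig b) as Hnu. simpl in Hnu. rewrite Hab in Hnu.
    destruct (nonurgent_prop G _ Hnu) as [_ Hu].
    apply (SW n b); auto.
    + rewrite hC_S. rewrite EC, cur_emb. simpl (fst (embS G _)). simpl. fold st. rewrite Hmax. rewrite Eb. reflexivity.
    + fold h. fold st. destruct (Rle_lt_or_eq_dec (snd st) r (proj2 Ht)) as [Hyr|Hyr].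
      * eapply counter_after_first with (b := r) (s' := (fst st, r)) (c0 := Delay (r - snd st))
          (W := OptCost G r e2 (fst st, r)).
        -- apply shiftS_valid; auto.
        -- exact Hng.
        -- repeat split; auto; lra.
        -- intros E. rewrite Hmax in E. discriminate.
        -- change (step st (Delay (r - snd st))) with (fst st, snd st + (r - snd st)). f_equal. ring.
        -- apply Vspec.
        -- unfold wA. simpl. fold h. fold st. rewrite (Rmult_comm (r - snd st)). lra.
      * assert (Est : (fst st, r) = st) by (rewrite <- Hyr; symmetry; apply surjective_pairing).
        destruct (Vspec (fst st)) as [_ [_ H3]]. rewrite Est in H3.
        apply (H3 (shiftS muG sA h)).
        -- apply shiftS_valid; auto.
        -- unfold wA. rewrite Est, Hyr. replace (r - r) with 0 by ring. lra.
Qed.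

Lemma stepNone n : (n < N)%nat -> InvA n -> fsw (QA sA) [] (hG n) = None -> InvA (S n).
Proof.
  intros HnN HI HF. destruct (Gfacts n HnN) as [Hng Hav].
  assert (HI' := HI). destruct HI' as [I1 I2]. destruct (I1 n (le_n n)) as [EC Ht].
  pose proof (fsw_none_not _ _ _ HF) as HnQ. simpl in HnQ.
  set (h := hG n) in *. set (st := cur sA h) in *.
  assert (Hnext : exists cc, hG (S n) = h ++ [cc] /\ hC (S n) = map (embT G) (h ++ [cc]) /\
                        0 <= snd (step st cc) <= r).
  { destruct (gmin G (fst st)) eqn:Eo.
    - assert (Hc0 : avail G e2 st (muG sA h)) by (apply (proj1 HmuG); auto).
      exists (muG sA h). split; [rewrite hG_S; fold h; fold st; rewrite Eo; reflexivity|].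
      assert (Hl : liftC G r e2 muG (embS G sA) (map (embT G) h) = embT G (muG sA h) /\
                   0 <= snd (step st (muG sA h)) <= r).
      { destruct (muG sA h) as [l'|t] eqn:Em.
        - split; [|simpl; lra]. rewrite liftC_at; fold h; fold st; rewrite Em; [reflexivity|exact Hc0].
        - assert (Hle : snd st + t <= r).
          { apply Rnot_lt_le. intros Hlt. apply HnQ. left. split; auto. exists t; auto. }
          destruct Hc0 as [Ht0 [Hu _]].
          split; [|simpl; lra].
          rewrite liftC_at; fold h; fold st; rewrite Em; simpl; destruct (Rle_dec _ r); try lra; try reflexivity.
          simpl. repeat split; auto. }
      destruct Hl as [Hl1 Hl2]. split; [|exact Hl2].
      rewrite hC_S, EC, cur_emb. simpl (fst (embS G _)). simpl. fold st. rewrite Eo. rewrite Hl1, map_app. reflexivity.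
    - assert (HCav : exists trC, avail (CostConsistent G r e2) r (embS G st) trC).
      { destruct Hav as [tr Htr]. eapply avail_G_CC; eauto. }
      assert (Hcc : avail (CostConsistent G r e2) r (embS G st) (chiC (embS G sA) (map (embT G) h))).
      { pose proof (proj1 HchiC (embS G sA) (map (embT G) h)) as X. rewrite cur_emb in X. apply X; auto. }
      assert (Hnb : ~ exists b, chiC (embS G sA) (map (embT G) h) = Disc (inr b)).
      { intros Hb. apply HnQ. right. split; auto. }
      exists (unconv G (chiC (embS G sA) (map (embT G) h))).
      assert (Hlow : chiG sA h = unconv G (chiC (embS G sA) (map (embT G) h))).
      { unfold chiG. rewrite splice_none by exact HF. unfold lowerG, wrap, lowerG_in.
        destruct (excluded_middle_informative (avail (CostConsistent G r e2) r (embS G (cur sA h)) _))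
          as [_|n0]; [|fold st in n0; contradiction].
        destruct (excluded_middle_informative _) as [_|n0]; [reflexivity|].
        exfalso. apply n0. fold st.
        destruct (chiC (embS G sA) (map (embT G) h)) as [[l'|b]|t] eqn:Ec; simpl in *.
        - exact Hcc.
        - exfalso. apply Hnb. eauto.
        - destruct Hcc as [A1 [A2 A3]]. repeat split; auto; lra. }
      split; [rewrite hG_S; fold h; fold st; rewrite Eo, Hlow; reflexivity|].
      split.
      + rewrite hC_S, EC, cur_emb. simpl (fst (embS G _)). simpl. fold st. rewrite Eo.
        rewrite map_app. simpl.
        destruct (chiC (embS G sA) (map (embT G) h)) as [[l'|b]|t] eqn:Ec; simpl; try reflexivity.
        exfalso. apply Hnb. eauto.
      + destruct (chiC (embS G sA) (map (embT G) h)) as [[l'|b]|t] eqn:Ec; simpl in *.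
        * lra.
        * exfalso. apply Hnb. eauto.
        * destruct Hcc as [A1 [A2 A3]]. lra. }
  destruct Hnext as [cc [E1 [E2 E3]]].
  split.
  - intros m Hm. destruct (Nat.le_gt_cases m n) as [Hmn|Hmn]; [apply I1; auto|].
    assert (m = S n) by lia. subst m. rewrite E1, E2, cur_snoc. fold st. auto.
  - intros m Hm. destruct (Nat.lt_ge_cases m n) as [Hmn|Hmn]; [apply I2; auto|].
    assert (m = n) by lia. subst m. exact HF.
Qed.

Lemma claimA n : (n <= N)%nat -> InvA n \/ GOODA (OptCost G b1 e2 sA + eps).
Proof.
  induction n as [|n IH]; intros Hn.
  - left. split.
    + intros m Hm. assert (m = O) by lia. subst m. split; [reflexivity|]. simpl. unfold sA. simpl. lra.
    + intros m Hm. lia.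
  - destruct (IH ltac:(lia)) as [HI|HG']; [|right; exact HG'].
    destruct (fsw_play_cases (QA sA) hG n eq_refl) as [HF|[HF HQ]].
    + intros m. eexists. apply hG_S.
    + apply HI.
    + left. apply stepNone; auto.
    + right. apply (stepSome n); auto.
Qed.

Lemma finishA : GOODA (OptCost G b1 e2 sA + eps).
Proof.
  destruct (claimA N (le_n N)) as [HI|H]; [|exact H].
  destruct (proj1 HI N (le_n N)) as [E _].
  exists N, c. split; [|lra]. split.
  - destruct Hr as [[g [Hg Hcg]] _]. exists g. fold (hC N). fold (hG N) in Hg, Hcg.
    rewrite E, cur_emb, hprice_emb. split; [exact Hg|exact Hcg].
  - intros m Hm. fold (hC m). apply (CCfacts N); auto; lia.
Qed.

End WithRun.
End PartA.

Lemma partA l x eps : b1 <= x <= r -> 0 < eps ->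
  exists muC, valid_strat (CostConsistent G r e2) r true muC /\
    forall chiC, valid_strat (CostConsistent G r e2) r false chiC ->
      cost_le (CostConsistent G r e2) r (inl l, x) muC chiC (OptCost G b1 e2 (l, x) + eps).
Proof.
  intros Hx Heps.
  assert (Hv : isOptCost G b1 e2 (l, x) (OptCost G b1 e2 (l, x))).
  { apply opt_spec. apply HG; lra. }
  destruct Hv as [_ [H2 _]]. destruct (H2 (eps / 2) ltac:(lra)) as [muG [HmuG Hg]].
  exists (liftC G r e2 muG). split; [apply liftC_valid; auto|].
  intros chiC HchiC.
  destruct (Hg (chiG eps muG chiC) (chiG_valid eps muG chiC HchiC)) as [N [c [Hr Hc]]].
  apply (finishA l x Hx eps Heps muG HmuG chiC HchiC N c Hr Hc).
Qed.


Section PartB.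
Context (l : L) (x : R) (Hx : b1 <= x <= r)
  (muC : strat (CCLoc G)) (HmuC : valid_strat (CostConsistent G r e2) r true muC)
  (w : R) (Hw : w < OptCost G b1 e2 (l, x)).

Definition sB : L * R := (l, x).
Definition epsB : R := (OptCost G b1 e2 sB - w) / 2.

Lemma epsB_pos : 0 < epsB.
Proof. unfold epsB, sB. lra. Qed.

Definition MinSw (s0 : L * R) (p : list (trans L)) : Prop :=
  gmin G (fst (cur s0 p)) = true /\ exists b, muC (embS G s0) (map (embT G) p) = Disc (inr b).

Definition QB (s0 : L * R) (p : list (trans L)) : Prop :=
  MinSw s0 p \/
  (exists q t, p = q ++ [Delay t] /\ gmin G (fst (cur s0 q)) = false /\
     snd (cur s0 q) <= r /\ r < snd (cur s0 q) + t).

Definition wB (s0 : L * R) (p : list (trans L)) : R :=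
  if excluded_middle_informative (MinSw s0 p)
  then (r - snd (cur s0 p)) * INR (gprice G (fst (cur s0 p))) + OptCost G r e2 (fst (cur s0 p), r) + epsB
  else OptCost G r e2 (cur s0 p) + epsB.

Definition tauB (s0 : L * R) (p : list (trans L)) : strat L := pick_min G e2 (cur s0 p) (wB s0 p).

Definition muGB : strat L := splice (lowerG G r e2 muC) QB tauB.

Lemma muGB_valid : valid_strat G e2 true muGB.
Proof. apply splice_valid. - apply lowerG_valid; auto. - intros. apply pick_min_spec. Qed.

Section WithChi.
Context (chiG : strat L) (HchiG : valid_strat G e2 false chiG).

Definition chiCB : strat (CCLoc G) := liftC G r e2 chiG.

Definition hGB n := play G muGB chiG sB n.
Definition hCB n := play (CostConsistent G r e2) muC chiCB (embS G sB) n.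

Lemma hGB_S n : hGB (S n) = hGB n ++ [if gmin G (fst (cur sB (hGB n))) then muGB sB (hGB n) else chiG sB (hGB n)].
Proof. reflexivity. Qed.

Lemma hCB_S n : hCB (S n) = hCB n ++
  [if gmin (CostConsistent G r e2) (fst (cur (embS G sB) (hCB n))) then muC (embS G sB) (hCB n)
   else chiCB (embS G sB) (hCB n)].
Proof. reflexivity. Qed.

Definition InvB n :=
  (forall m, (m <= n)%nat -> hCB m = map (embT G) (hGB m) /\ 0 <= snd (cur sB (hGB m)) <= r) /\
  (forall m, (m < n)%nat -> fsw (QB sB) [] (hGB m) = None).

Definition GOODB := cost_le G e2 sB muGB chiG (w + epsB).

Section WithRunB.
Context (NC : nat) (cC : R) (HrC : reaches (CostConsistent G r e2) r (embS G sB) muC chiCB NC cC)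
  (HcC : cC <= w).

Lemma CCfB m : (m < NC)%nat -> ggoal (CostConsistent G r e2) (fst (cur (embS G sB) (hCB m))) = None /\
   exists tr, avail (CostConsistent G r e2) r (cur (embS G sB) (hCB m)) tr.
Proof. intros Hm. destruct HrC as [_ H]. apply H. exact Hm. Qed.

Lemma GfB n m : InvB n -> (m <= n)%nat -> (m < NC)%nat ->
  ggoal G (fst (cur sB (hGB m))) = None /\ exists tr, avail G e2 (cur sB (hGB m)) tr.
Proof.
  intros [I1 _] Hmn HmN. destruct (I1 m Hmn) as [E Ht]. destruct (CCfB m HmN) as [Hg _].
  rewrite E, cur_emb in Hg. simpl in Hg. split; [exact Hg|]. apply Gavail; auto; lra.
Qed.

Lemma reachInr n b : (n < NC)%nat -> InvB n -> hCB (S n) = hCB n ++ [Disc (inr b)] ->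
  NC = S n /\ cC = OptCost G r e2 (proj1_sig b, r) +
     (r - snd (cur sB (hGB n))) * INR (gprice G (proj1_sig b)) + hprice G sB (hGB n).
Proof.
  intros HnN [I1 _] HS. destruct (I1 n (le_n n)) as [E _].
  destruct HrC as [[g [Hg Hcg]] Hpre].
  assert (HN : NC = S n).
  { destruct (Nat.lt_ge_cases (S n) NC) as [Hl|Hl]; [|lia].
    destruct (Hpre (S n) Hl) as [Hng _]. fold (hCB (S n)) in Hng.
    rewrite HS, cur_snoc in Hng. simpl in Hng. discriminate. }
  split; [exact HN|]. subst NC. fold (hCB (S n)) in Hg, Hcg.
  rewrite HS, cur_snoc, E, cur_emb in Hg. simpl in Hg. inversion Hg. subst g.
  rewrite Hcg, HS, E, hprice_app, hprice_emb, cur_emb, cur_snoc, cur_emb. simpl. ring.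
Qed.

Lemma SWB n' : fsw (QB sB) [] (hGB n') = Some (hGB n', []) ->
  (forall m', (m' < n')%nat -> ggoal G (fst (cur sB (hGB m'))) = None /\
     exists tr, avail G e2 (cur sB (hGB m')) tr) ->
  (exists mu', valid_strat G e2 true mu' /\ forall chi, valid_strat G e2 false chi ->
     cost_le G e2 (cur sB (hGB n')) mu' chi (wB sB (hGB n'))) ->
  hprice G sB (hGB n') + wB sB (hGB n') <= w + epsB -> GOODB.
Proof.
  intros HF Hpre Hex Hb. set (p := hGB n') in *.
  destruct (proj2 (pick_min_spec G e2 (cur sB p) (wB sB p)) Hex (shiftS chiG sB p)
              (shiftS_valid G e2 false chiG sB p HchiG)) as [m [c' [Hsub Hc']]].
  exists (n' + m)%nat, (hprice G sB p + c'). split; [|lra].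
  apply (reaches_join G e2 muGB chiG sB n' p (tauB sB p) (shiftS chiG sB p)); auto.
  - intros k. unfold muGB. rewrite splice_at; auto.
  - intros k. rewrite shiftS_at. reflexivity.
Qed.

Lemma stepB n : (n < NC)%nat -> InvB n -> InvB (S n) \/ GOODB.
Proof.
  intros HnN HI. assert (HI' := HI). destruct HI' as [I1 I2]. destruct (I1 n (le_n n)) as [EC Ht].
  destruct (GfB n n HI (le_n n) HnN) as [Hng Hav].
  destruct (CCfB n HnN) as [_ HCav]. rewrite EC, cur_emb in HCav.
  assert (Hpre : forall m', (m' <= n)%nat -> ggoal G (fst (cur sB (hGB m'))) = None /\
     exists tr, avail G e2 (cur sB (hGB m')) tr).
  { intros m' Hm'. apply (GfB n); auto. lia. }
  destruct (fsw_play_cases (QB sB) hGB n eq_refl) as [HF|[HF HQ]].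
  - intros m. eexists. apply hGB_S.
  - exact I2.
  -
    pose proof (fsw_none_not _ _ _ HF) as HnQ. simpl in HnQ.
    set (h := hGB n) in *. set (st := cur sB h) in *.
    destruct (gmin G (fst st)) eqn:Eo.
    + assert (Hcc : avail (CostConsistent G r e2) r (embS G st) (muC (embS G sB) (map (embT G) h))).
      { pose proof (proj1 HmuC (embS G sB) (map (embT G) h)) as X. rewrite cur_emb in X. apply X; auto. }
      assert (Hnb : ~ exists b, muC (embS G sB) (map (embT G) h) = Disc (inr b)).
      { intros Hb. apply HnQ. left. split; auto. }
      assert (Hlow : muGB sB h = unconv G (muC (embS G sB) (map (embT G) h))).
      { unfold muGB. rewrite splice_none by exact HF. unfold lowerG, wrap, lowerG_in.
        destruct (excluded_middle_informative (avail (CostConsistent G r e2) r (embS G (cur sB h)) _))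
          as [_|n0]; [|fold st in n0; contradiction].
        destruct (excluded_middle_informative _) as [_|n0]; [reflexivity|].
        exfalso. apply n0. fold st.
        destruct (muC (embS G sB) (map (embT G) h)) as [[l'|b]|t] eqn:Ec; simpl in *.
        - exact Hcc.
        - exfalso. apply Hnb. eauto.
        - destruct Hcc as [A1 [A2 A3]]. repeat split; auto; lra. }
      left. split.
      * intros m Hm. destruct (Nat.le_gt_cases m n) as [Hmn|Hmn]; [apply I1; auto|].
        assert (m = S n) by lia. subst m.
        rewrite hGB_S, hCB_S. fold h. rewrite EC, cur_emb. simpl (fst (embS G _)). simpl. fold st.
        rewrite Eo, Hlow, map_app, cur_snoc. fold st.
        destruct (muC (embS G sB) (map (embT G) h)) as [[l'|b]|t] eqn:Ec; simpl in *.
        -- split; [reflexivity|lra].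
        -- exfalso. apply Hnb. eauto.
        -- destruct Hcc as [A1 [A2 A3]]. split; [reflexivity|lra].
      * intros m Hm. destruct (Nat.lt_ge_cases m n) as [Hmn|Hmn]; [apply I2; auto|].
        assert (m = n) by lia. subst m. exact HF.
    + assert (Hc0 : avail G e2 st (chiG sB h)) by (apply (proj1 HchiG); auto).
      destruct (chiG sB h) as [l'|t] eqn:Ech.
      * assert (Hl : chiCB (embS G sB) (map (embT G) h) = Disc (inl l')).
        { unfold chiCB. rewrite liftC_at; fold h; fold st; rewrite Ech; [reflexivity|exact Hc0]. }
        left. split.
        -- intros m Hm. destruct (Nat.le_gt_cases m n) as [Hmn|Hmn]; [apply I1; auto|].
           assert (m = S n) by lia. subst m.
           rewrite hGB_S, hCB_S. fold h. rewrite EC, cur_emb. simpl (fst (embS G _)). simpl. fold st.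
           rewrite Eo, Ech, Hl, map_app, cur_snoc. fold st. simpl. split; [reflexivity|lra].
        -- intros m Hm. destruct (Nat.lt_ge_cases m n) as [Hmn|Hmn]; [apply I2; auto|].
           assert (m = n) by lia. subst m. exact HF.
      * destruct Hc0 as [Ht0 [Hu Hte]].
        destruct (Rle_dec (snd st + t) r) as [Hle|Hgt].
        -- assert (Hl : chiCB (embS G sB) (map (embT G) h) = Delay t).
           { unfold chiCB. rewrite liftC_at; fold h; fold st; rewrite Ech; unfold convA;
               destruct (Rle_dec _ r); try contradiction; try reflexivity.
             repeat split; auto. }
           left. split.
           ++ intros m Hm. destruct (Nat.le_gt_cases m n) as [Hmn|Hmn]; [apply I1; auto|].
              assert (m = S n) by lia. subst m.
              rewrite hGB_S, hCB_S. fold h. rewrite EC, cur_emb. simpl (fst (embS G _)). simpl. fold st.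
              rewrite Eo, Ech, Hl, map_app, cur_snoc. fold st. simpl. split; [reflexivity|lra].
           ++ intros m Hm. destruct (Nat.lt_ge_cases m n) as [Hmn|Hmn]; [apply I2; auto|].
              assert (m = n) by lia. subst m. exact HF.
        --
           right.
           pose proof (nonurgent_of G _ Hng Hu) as Hnu.
           destruct (toInr_spec G _ Hnu) as [b [Eb Hb]].
           assert (Hl : chiCB (embS G sB) (map (embT G) h) = Disc (inr b)).
           { unfold chiCB. rewrite liftC_at; fold h; fold st; rewrite Ech; unfold convA;
               destruct (Rle_dec _ r); try contradiction; try exact Eb.
             rewrite Eb. exact Hb. }
           assert (HS : hCB (S n) = hCB n ++ [Disc (inr b)]).
           { rewrite hCB_S. fold h. rewrite EC, cur_emb. simpl (fst (embS G _)). simpl. fold st.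
             rewrite Eo, Hl. reflexivity. }
           destruct (reachInr n b HnN HI HS) as [HN HcCe]. fold h in HcCe. fold st in HcCe.
           rewrite Hb in HcCe.
           set (p := hGB (S n)).
           assert (Ep : p = h ++ [Delay t]) by (unfold p; rewrite hGB_S; fold h; fold st; rewrite Eo, Ech; reflexivity).
           assert (HQp : QB sB p).
           { right. exists h, t. split; [exact Ep|]. fold st. split; auto. split; [lra|lra]. }
           assert (HFp : fsw (QB sB) [] p = Some (p, [])).
           { rewrite Ep in HQp |- *. destruct (fsw_snoc_none (QB sB) [] h (Delay t) HF) as [N0|[S0 _]].
             - exfalso. apply (fsw_none_not _ _ _ N0). exact HQp.
             - exact S0. }
           assert (Ecur : cur sB p = (fst st, snd st + t)) by (rewrite Ep, cur_snoc; reflexivity).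
           assert (HwB : wB sB p = OptCost G r e2 (fst st, snd st + t) + epsB).
           { unfold wB. destruct (excluded_middle_informative (MinSw sB p)) as [[Hm _]|_].
             - rewrite Ecur in Hm. simpl in Hm. rewrite Eo in Hm. discriminate.
             - rewrite Ecur. reflexivity. }
           apply (SWB (S n)).
           ++ exact HFp.
           ++ intros m' Hm'. apply Hpre. lia.
           ++ fold p. rewrite Ecur, HwB. destruct (Wspec (fst st) (snd st + t) ltac:(lra)) as [_ [H2 _]].
              apply H2. apply epsB_pos.
           ++ fold p. rewrite HwB, Ep, hprice_app. simpl. fold st.
              assert (Hi : INR (gprice G (fst st)) * (snd st + t - r) + OptCost G r e2 (fst st, snd st + t)
                           <= OptCost G r e2 (fst st, r)).
              { apply (max_delay_ineq G e2 r r (fst st) r (snd st + t)); auto; try lra;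
                  [apply Vspec|apply Wspec; lra]. }
              assert (INR (gprice G (fst st)) * (snd st + t - r) + (r - snd st) * INR (gprice G (fst st))
                      = INR (gprice G (fst st)) * t) by ring.
              lra.
  - (* switch now: must be a Min switch *)
    right.
    set (h := hGB n) in *. set (st := cur sB h) in *.
    destruct HQ as [[Hmin [b Eb]]|[q [t [Eq [_ [Hq1 Hq2]]]]]].
    + fold st in Hmin.
      assert (Hab : avail (CostConsistent G r e2) r (embS G st) (Disc (inr b))).
      { rewrite <- Eb. pose proof (proj1 HmuC (embS G sB) (map (embT G) h)) as X. rewrite cur_emb in X. apply X; auto. }
      simpl in Hab.
      pose proof (proj2_sig b) as Hnu. simpl in Hnu. rewrite Hab in Hnu.
      destruct (nonurgent_prop G _ Hnu) as [_ Hu].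
      assert (HS : hCB (S n) = hCB n ++ [Disc (inr b)]).
      { rewrite hCB_S. fold h. rewrite EC, cur_emb. simpl (fst (embS G _)). simpl. fold st.
        rewrite Hmin, Eb. reflexivity. }
      destruct (reachInr n b HnN HI HS) as [HN HcCe]. fold h in HcCe. fold st in HcCe. rewrite Hab in HcCe.
      assert (HwB : wB sB h = (r - snd st) * INR (gprice G (fst st)) + OptCost G r e2 (fst st, r) + epsB).
      { unfold wB. destruct (excluded_middle_informative (MinSw sB h)) as [_|n0]; [reflexivity|].
        exfalso. apply n0. split; eauto. }
      apply (SWB n).
      * exact HF.
      * intros m' Hm'. apply Hpre. lia.
      * fold h. fold st. rewrite HwB.
        destruct (Rle_lt_or_eq_dec (snd st) r (proj2 Ht)) as [Hyr|Hyr].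
        -- destruct (min_after_first G e2 st (fst st, r) (Delay (r - snd st)) (OptCost G r e2 (fst st, r) + epsB))
             as [mu [Hmu Hc]].
           ++ exact Hmin.
           ++ exact Hng.
           ++ repeat split; auto; lra.
           ++ change (step st (Delay (r - snd st))) with (fst st, snd st + (r - snd st)). f_equal. ring.
           ++ destruct (Vspec (fst st)) as [_ [H2 _]]. apply H2. apply epsB_pos.
           ++ exists mu. split; [exact Hmu|]. intros chi Hchi. eapply cost_le_mono; [apply Hc; exact Hchi|].
              change (tprice G st (Delay (r - snd st))) with (INR (gprice G (fst st)) * (r - snd st)).
              rewrite (Rmult_comm (r - snd st)). lra.
        -- assert (Est : (fst st, r) = st) by (rewrite <- Hyr; symmetry; apply surjective_pairing).
           destruct (Vspec (fst st)) as [_ [H2 _]]. rewrite Est in H2.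
           destruct (H2 epsB epsB_pos) as [mu [Hmu Hc]].
           exists mu. split; [exact Hmu|]. intros chi Hchi. eapply cost_le_mono; [apply Hc; exact Hchi|].
           rewrite Est, Hyr. replace (r - r) with 0 by ring. lra.
      * fold h. rewrite HwB. fold st. lra.
    + exfalso. assert (E1 : snd (cur sB h) = snd (cur sB q) + t).
      { unfold h in *. rewrite Eq, cur_snoc. reflexivity. }
      fold st in E1. lra.
Qed.

Lemma claimB n : (n <= NC)%nat -> InvB n \/ GOODB.
Proof.
  induction n as [|n IH]; intros Hn.
  - left. split.
    + intros m Hm. assert (m = O) by lia. subst m. split; [reflexivity|]. simpl. unfold sB. simpl. lra.
    + intros m Hm. lia.
  - destruct (IH ltac:(lia)) as [HI|HG']; [|right; exact HG'].
    apply stepB; auto.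
Qed.

Lemma finishB : GOODB.
Proof.
  destruct (claimB NC (le_n NC)) as [HI|H]; [|exact H].
  destruct (proj1 HI NC (le_n NC)) as [E _].
  pose proof epsB_pos.
  exists NC, cC. split; [|lra]. split.
  - destruct HrC as [[g [Hg Hcg]] _]. exists g. fold (hGB NC). fold (hCB NC) in Hg, Hcg.
    rewrite E, cur_emb, hprice_emb in *. split; [exact Hg|exact Hcg].
  - intros m Hm. fold (hGB m). apply (GfB NC); auto; lia.
Qed.

End WithRunB.
End WithChi.
End PartB.

Lemma partB l x : b1 <= x <= r ->
  forall muC, valid_strat (CostConsistent G r e2) r true muC ->
  forall w, w < OptCost G b1 e2 (l, x) ->
  exists chiC, valid_strat (CostConsistent G r e2) r false chiC /\
    ~ cost_le (CostConsistent G r e2) r (inl l, x) muC chiC w.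
Proof.
  intros Hx muC HmuC w Hw. apply NNPP. intros Hn.
  assert (HALL : forall chiC, valid_strat (CostConsistent G r e2) r false chiC ->
            cost_le (CostConsistent G r e2) r (inl l, x) muC chiC w).
  { intros chiC Hv. apply NNPP. intros Hc. apply Hn. exists chiC. auto. }
  assert (Hv : isOptCost G b1 e2 (l, x) (OptCost G b1 e2 (l, x))).
  { apply opt_spec. apply HG; lra. }
  destruct Hv as [_ [_ H3]].
  destruct (H3 (muGB l x muC w) (muGB_valid l x muC HmuC w) (w + epsB l x w)) as [chiG [HchiG Hnc]].
  { unfold epsB, sB. lra. }
  apply Hnc.
  destruct (HALL (chiCB chiG) (liftC_valid G r e2 Hre false chiG HchiG)) as [NC [cC [HrC HcC]]].
  apply (finishB l x Hx muC HmuC w Hw chiG HchiG NC cC HrC HcC).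
Qed.

End Env.


Theorem lemma2 (L : Type) (G : Game L) (b1 r e2 : R) :
  game_ok G ->
  (forall b e, 0 <= b -> b <= e -> e <= 1 ->
     forall (l : L) (x : R), b <= x <= e -> exists v, isOptCost G b e (l, x) v) ->
  0 <= b1 -> b1 <= r -> r <= e2 -> e2 <= 1 ->
  forall (l : L) (x : R),
    (b1 <= x <= r ->
       OptCost (CostConsistent G r e2) b1 r (inl l, x) = OptCost G b1 e2 (l, x)) /\
    (r < x <= e2 ->
       OptCost G r e2 (l, x) = OptCost G b1 e2 (l, x)).
Proof.
  intros _ HG Hb1 Hb1r Hre He2 l x. split.
  - intros Hx.
    assert (Hcc : isOptCost (CostConsistent G r e2) b1 r (inl l, x) (OptCost G b1 e2 (l, x))).
    { split; [simpl; lra|]. split.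
      - intros eps Heps. apply (partA G b1 r e2 HG Hb1 Hb1r Hre He2 l x eps Hx Heps).
      - intros mu Hmu w Hw. apply (partB G b1 r e2 HG Hb1 Hb1r Hre He2 l x Hx mu Hmu w Hw). }
    apply (isopt_unique (CostConsistent G r e2) r b1 b1 (inl l, x)); auto.
    apply opt_spec. eauto.
  - intros Hx.
    apply (isopt_unique G e2 r b1 (l, x)); apply opt_spec; apply HG; lra.
Qed.
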